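(* Let $M$ be a path-connected pre-$\Delta$-monoid with identity $e$. If $M$ does not have well-defined infinite $\pi_1$-products at $e$, then $M$ does not have well-defined infinite $\pi_1$-products at any of its points.
   Context: A pre-$\Delta$-monoid is a space $M$ with an associative operation $\ast$ with identity $e$ such that for any continuous paths $\alpha,\beta:[0,1]\to M$, the pointwise product $t\mapsto\alpha(t)\ast\beta(t)$ is continuous. A sequence of loops $\alpha_n\in\Omega(X,x)$ is a null-sequence if every neighborhood of $x$ contains $\mathrm{Im}(\alpha_n)$ for all but finitely many $n$; its infinite concatenation $\prod_{n=1}^\infty\alpha_n$ is the loop equal to (a linear reparametrization of) $\alpha_n$ on $[\frac{n-1}{n},\frac{n}{n+1}]$ and sending $1$ to $x$. $X$ has well-defined infinite $\pi_1$-products at $x$ if for all null-sequences $\alpha_n,\beta_n\in\Omega(X,x)$ with $\alpha_n\simeq\beta_n$ (path-homotopic) for every $n$, we have $\prod_{n=1}^\infty\alpha_n\simeq\prod_{n=1}^\infty\beta_n$. *)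

(* Defs.v *)
From Stdlib Require Import Reals ZArith.
Open Scope R_scope.

Record TopSpace := {
  carrier :> Type;
  isOpen : (carrier -> Prop) -> Prop;
  open_full : isOpen (fun _ => True);
  open_empty : isOpen (fun _ => False);
  open_inter : forall U V, isOpen U -> isOpen V -> isOpen (fun x => U x /\ V x);
  open_union : forall F : (carrier -> Prop) -> Prop,
      (forall U, F U -> isOpen U) -> isOpen (fun x => exists U, F U /\ U x)
}.

Definition unit_I (t : R) : Prop := 0 <= t <= 1.

(** A path in X: a map R -> X whose restriction to [0,1] is continuous
    (for the standard subspace topology of [0,1]). Values outside [0,1]
    are irrelevant. *)
Definition is_path (X : TopSpace) (a : R -> X) : Prop :=
  forall t, unit_I t -> forall U, isOpen X U -> U (a t) ->
    exists eps, 0 < eps /\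
      forall s, unit_I s -> Rabs (s - t) < eps -> U (a s).

Definition is_loop (X : TopSpace) (x : X) (a : R -> X) : Prop :=
  is_path X a /\ a 0 = x /\ a 1 = x.

Definition cont_on_square (X : TopSpace) (H : R -> R -> X) : Prop :=
  forall s t, unit_I s -> unit_I t -> forall U, isOpen X U -> U (H s t) ->
    exists eps, 0 < eps /\
      forall s' t', unit_I s' -> unit_I t' ->
        Rabs (s' - s) < eps -> Rabs (t' - t) < eps -> U (H s' t').

Definition path_homotopic (X : TopSpace) (a b : R -> X) : Prop :=
  exists H : R -> R -> X, cont_on_square X H /\
    (forall s, unit_I s -> H s 0 = a s) /\
    (forall s, unit_I s -> H s 1 = b s) /\
    (forall t, unit_I t -> H 0 t = a 0) /\
    (forall t, unit_I t -> H 1 t = a 1).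

(** Null-sequence of loops at x (indexed from 0; the paper's alpha_{n+1}
    is our alpha n). *)
Definition null_seq (X : TopSpace) (x : X) (alpha : nat -> R -> X) : Prop :=
  (forall n, is_loop X x (alpha n)) /\
  forall U, isOpen X U -> U x ->
    exists N, forall n, (N <= n)%nat -> forall t, unit_I t -> U (alpha n t).

(** Infinite concatenation: on [n/(n+1), (n+1)/(n+2)] it is the linear
    reparametrization of alpha n (the paper's alpha_{n+1} on
    [(m-1)/m, m/(m+1)] with m = n+1); 1 is sent to x. For t < 1 the index
    is n = floor(t/(1-t)), i.e. the n with n/(n+1) <= t < (n+1)/(n+2). *)
Definition inf_concat (X : TopSpace) (x : X) (alpha : nat -> R -> X) (t : R) : X :=
  if Rlt_dec t 1 then
    let n := Z.to_nat (Int_part (t / (1 - t))) in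
    alpha n ((t - INR n / INR (n + 1)) * (INR (n + 1) * INR (n + 2)))
  else x.

Definition wd_inf_products (X : TopSpace) (x : X) : Prop :=
  forall alpha beta : nat -> R -> X,
    null_seq X x alpha -> null_seq X x beta ->
    (forall n, path_homotopic X (alpha n) (beta n)) ->
    path_homotopic X (inf_concat X x alpha) (inf_concat X x beta).

Definition path_connected (X : TopSpace) : Prop :=
  forall a b : X, exists p : R -> X, is_path X p /\ p 0 = a /\ p 1 = b.

Definition pre_delta_monoid (M : TopSpace) (op : M -> M -> M) (e : M) : Prop :=
  (forall a b c, op a (op b c) = op (op a b) c) /\
  (forall a, op e a = a) /\ (forall a, op a e = a) /\
  (forall alpha beta : R -> M, is_path M alpha -> is_path M beta ->
     is_path M (fun t => op (alpha t) (beta t))).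

(* Main.v *)
Require Import Defs.
From Stdlib Require Import Reals Lra Lia ZArith Classical ClassicalEpsilon.
Open Scope R_scope.

Definition a (n : nat) : R := INR n / INR (n + 1).
Definition cc (n : nat) : R := INR (n + 1) * INR (n + 2).
Definition rr (n : nat) (s : R) : R := (s - a n) * cc n.
Definition idx (t : R) : nat := Z.to_nat (Int_part (t / (1 - t))).

Lemma INR_S1 n : INR (n + 1) = INR n + 1.
Proof. rewrite plus_INR; simpl; ring. Qed.
Lemma INR_S2 n : INR (n + 2) = INR n + 2.
Proof. rewrite plus_INR; simpl; ring. Qed.

Lemma a_eq n : a n = INR n / (INR n + 1).
Proof. unfold a; rewrite INR_S1; reflexivity. Qed.
Lemma aS_eq n : a (S n) = (INR n + 1) / (INR n + 2).
Proof. unfold a. rewrite INR_S1, S_INR. f_equal. ring. Qed.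
Lemma cc_eq n : cc n = (INR n + 1) * (INR n + 2).
Proof. unfold cc; rewrite INR_S1, INR_S2; reflexivity. Qed.
Lemma cc_pos n : 0 < cc n.
Proof. rewrite cc_eq. pose proof (pos_INR n). nra. Qed.
Lemma one_minus_a n : 1 - a n = / (INR n + 1).
Proof. rewrite a_eq. pose proof (pos_INR n). field. lra. Qed.
Lemma a_pos n : 0 <= a n.
Proof. rewrite a_eq. pose proof (pos_INR n). apply Rmult_le_pos; [lra|]. left; apply Rinv_0_lt_compat; lra. Qed.
Lemma a_lt1 n : a n < 1.
Proof. pose proof (one_minus_a n). pose proof (pos_INR n).
  assert (0 < / (INR n + 1)) by (apply Rinv_0_lt_compat; lra). lra. Qed.
Lemma a_mono m n : (m <= n)%nat -> a m <= a n.
Proof. intro H. pose proof (one_minus_a m). pose proof (one_minus_a n).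
  assert (/ (INR n + 1) <= / (INR m + 1)).
  { apply Rinv_le_contravar. pose proof (pos_INR m); lra. apply le_INR in H; lra. }
  lra. Qed.
Lemma a_lt_S n : a n < a (S n).
Proof. pose proof (one_minus_a n). pose proof (one_minus_a (S n)). rewrite S_INR in H0.
  assert (/ (INR n + 1 + 1) < / (INR n + 1)).
  { apply Rinv_lt_contravar. pose proof (pos_INR n); nra. lra. }
  lra. Qed.
Lemma a0 : a 0 = 0.
Proof. unfold a. simpl. field. Qed.

Lemma rr_a n : rr n (a n) = 0.
Proof. unfold rr; ring. Qed.
Lemma rr_aS n : rr n (a (S n)) = 1.
Proof. unfold rr. rewrite aS_eq, a_eq, cc_eq. pose proof (pos_INR n). field. lra. Qed.
Lemma rr_pt n r : rr n (a n + r / cc n) = r.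
Proof. unfold rr. pose proof (cc_pos n). field. lra. Qed.
Lemma rr_diff n s t : rr n s - rr n t = (s - t) * cc n.
Proof. unfold rr; ring. Qed.
Lemma rr_I n s : a n <= s <= a (S n) -> unit_I (rr n s).
Proof. intros [H1 H2]. pose proof (rr_aS n). pose proof (cc_pos n). unfold rr in *. unfold unit_I.
  split; nra. Qed.
Lemma pt_seg n r : unit_I r -> a n <= a n + r / cc n <= a (S n).
Proof. intros [H1 H2]. pose proof (cc_pos n). pose proof (rr_aS n). unfold rr in H0.
  assert (r / cc n <= 1 / cc n) by (apply Rmult_le_compat_r; [left; apply Rinv_0_lt_compat; lra| lra]).
  assert (0 <= r / cc n) by (apply Rmult_le_pos; [lra| left; apply Rinv_0_lt_compat; lra]).
  assert (a (S n) - a n = 1 / cc n).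
  { apply (Rmult_eq_reg_r (cc n)); [|lra]. unfold Rdiv. rewrite Rmult_assoc, Rinv_l by lra. lra. }
  lra. Qed.

Lemma idx_spec n s : a n <= s < a (S n) -> idx s = n.
Proof.
  intros [H1 H2]. pose proof (a_lt1 (S n)). pose proof (pos_INR n).
  assert (s < 1) by lra.
  rewrite a_eq in H1. rewrite aS_eq in H2.
  assert (E1 : INR n <= s / (1 - s)).
  { apply Rmult_le_reg_r with (1 - s); [lra|]. unfold Rdiv. rewrite Rmult_assoc, Rinv_l by lra.
    apply Rmult_le_compat_r with (r := INR n + 1) in H1; [|lra].
    unfold Rdiv in H1. rewrite Rmult_assoc, Rinv_l in H1 by lra. nra. }
  assert (E2 : s / (1 - s) < INR n + 1).
  { apply Rmult_lt_reg_r with (1 - s); [lra|]. unfold Rdiv. rewrite Rmult_assoc, Rinv_l by lra.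
    apply Rmult_lt_compat_r with (r := INR n + 2) in H2; [|lra].
    unfold Rdiv in H2. rewrite Rmult_assoc, Rinv_l in H2 by lra. nra. }
  unfold idx, Int_part.
  rewrite <- (tech_up (s / (1 - s)) (Z.of_nat n + 1)).
  - rewrite Z.add_simpl_r. apply Nat2Z.id.
  - rewrite plus_IZR, <- INR_IZR_INZ. simpl. lra.
  - rewrite plus_IZR, <- INR_IZR_INZ. simpl. lra.
Qed.

Lemma idx_exists s : 0 <= s < 1 -> a (idx s) <= s < a (S (idx s)).
Proof.
  intros [H1 H2]. unfold idx.
  destruct (base_Int_part (s / (1 - s))) as [B1 B2].
  set (z := Int_part (s / (1 - s))) in *.
  assert (P : 0 <= s / (1 - s)) by (apply Rmult_le_pos; [lra| left; apply Rinv_0_lt_compat; lra]).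
  assert (Z0 : (0 <= z)%Z). { assert (IZR (-1) < IZR z) by (simpl; lra). apply lt_IZR in H. lia. }
  assert (E : INR (Z.to_nat z) = IZR z) by (rewrite INR_IZR_INZ, Z2Nat.id; auto).
  set (n := Z.to_nat z) in *.
  assert (Q : s / (1 - s) * (1 - s) = s) by (field; lra).
  rewrite a_eq, aS_eq. pose proof (pos_INR n). split.
  - apply Rmult_le_reg_r with (INR n + 1); [lra|]. unfold Rdiv. rewrite Rmult_assoc, Rinv_l by lra.
    nra.
  - apply Rmult_lt_reg_r with (INR n + 2); [lra|]. unfold Rdiv. rewrite Rmult_assoc, Rinv_l by lra.
    nra.
Qed.

Section IC.
Variable X : TopSpace.
Variable x : X.
Variable al : nat -> R -> X.

Lemma ic_lt t : t < 1 -> inf_concat X x al t = al (idx t) (rr (idx t) t).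
Proof. intro H. unfold inf_concat. destruct (Rlt_dec t 1); [reflexivity|contradiction]. Qed.
Lemma ic_1 : inf_concat X x al 1 = x.
Proof. unfold inf_concat. destruct (Rlt_dec 1 1); [lra|reflexivity]. Qed.

Hypothesis Hloop : forall n, is_loop X x (al n).

Lemma seg_eval n s : a n <= s <= a (S n) -> inf_concat X x al s = al n (rr n s).
Proof.
  intros [H1 H2]. pose proof (a_lt1 (S n)). rewrite ic_lt by lra.
  destruct (Rlt_le_dec s (a (S n))).
  - rewrite (idx_spec n s) by lra. reflexivity.
  - assert (s = a (S n)) by lra. subst s.
    rewrite (idx_spec (S n) (a (S n))) by (pose proof (a_lt_S (S n)); lra).
    rewrite rr_a, rr_aS. destruct (Hloop (S n)) as [_ [-> _]]. destruct (Hloop n) as [_ [_ ->]]. reflexivity.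
Qed.

Lemma seg_pt n r : unit_I r -> inf_concat X x al (a n + r / cc n) = al n r.
Proof. intro H. rewrite (seg_eval n) by (apply pt_seg; auto). rewrite rr_pt. reflexivity. Qed.

Lemma Rabs_rr n s t eps : Rabs (s - t) < eps / cc n -> Rabs (rr n s - rr n t) < eps.
Proof. intro H. pose proof (cc_pos n). rewrite rr_diff, Rabs_mult, (Rabs_right (cc n)) by lra.
  apply Rmult_lt_compat_r with (r := cc n) in H; [|lra]. unfold Rdiv in H.
  rewrite Rmult_assoc, Rinv_l, Rmult_1_r in H by lra. exact H. Qed.

Lemma seg_cont n t U : isOpen X U -> a n <= t <= a (S n) ->
  (exists e0, 0 < e0 /\ forall s, unit_I s -> Rabs (s - t) < e0 -> a n <= s <= a (S n)) ->
  U (al n (rr n t)) ->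
  exists eps, 0 < eps /\ forall s, unit_I s -> Rabs (s - t) < eps -> U (inf_concat X x al s).
Proof.
  intros HU Ht [e0 [He0 H0]] HUt.
  destruct (Hloop n) as [Hp _].
  destruct (Hp (rr n t) (rr_I n t Ht) U HU HUt) as [e1 [He1 H1]].
  pose proof (cc_pos n).
  exists (Rmin e0 (e1 / cc n)). split.
  { apply Rmin_glb_lt; auto. apply Rdiv_lt_0_compat; lra. }
  intros s Hs Hd. assert (Hsg := H0 s Hs (Rlt_le_trans _ _ _ Hd (Rmin_l _ _))).
  rewrite (seg_eval n s Hsg). apply H1. apply rr_I; auto.
  apply Rabs_rr. eapply Rlt_le_trans; [exact Hd| apply Rmin_r].
Qed.

End IC.

Lemma ic_path X x al : null_seq X x al -> is_path X (inf_concat X x al).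
Proof.
  intros [Hl Hn] t Ht U HU HUt.
  destruct (Rlt_dec t 1) as [Ht1|Ht1].
  2:{ assert (t = 1) by (destruct Ht; lra). subst t.
      rewrite ic_1 in HUt.
      destruct (Hn U HU HUt) as [N HN].
      exists (/ (INR N + 1)). split.
      { apply Rinv_0_lt_compat. pose proof (pos_INR N); lra. }
      intros s Hs Hd. destruct (Rlt_dec s 1) as [Hs1|Hs1].
      - destruct (idx_exists s) as [Hlo Hhi]; [destruct Hs; lra|].
        rewrite ic_lt by auto. apply HN.
        + destruct (le_lt_dec N (idx s)) as [h|h]; auto. exfalso.
          pose proof (a_mono (S (idx s)) N h). pose proof (one_minus_a N).
          rewrite Rabs_left1 in Hd by lra. lra.
        + apply rr_I; lra.
      - assert (s = 1) by (destruct Hs; lra). subst s. rewrite ic_1. exact HUt. }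
  destruct (idx_exists t) as [Hlo Hhi]; [destruct Ht; lra|].
  rewrite ic_lt in HUt by auto.
  remember (idx t) as n eqn:En.
  destruct (Rlt_le_dec (a n) t) as [Hlt|Hge].
  - apply (seg_cont X x al Hl n t U HU); auto; [lra|].
    exists (Rmin (t - a n) (a (S n) - t)). split.
    + apply Rmin_glb_lt; lra.
    + intros s Hs Hd. pose proof (Rmin_l (t - a n) (a (S n) - t)). pose proof (Rmin_r (t - a n) (a (S n) - t)).
      split_Rabs; lra.
  - assert (Ht0 : t = a n) by lra.
    destruct n as [|m].
    + apply (seg_cont X x al Hl 0 t U HU); auto; [lra|].
      exists (a 1 - t). split; [lra|]. intros s Hs Hd. rewrite a0. destruct Hs. split_Rabs; lra.
    + rewrite Ht0, rr_a in HUt.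
      destruct (Hl (S m)) as [Hp [H0 _]]. rewrite H0 in HUt.
      destruct (Hl m) as [Hpm [_ H1m]].
      destruct (Hp 0 (conj (Rle_refl 0) Rle_0_1) U HU (eq_ind_r U HUt H0)) as [e1 [He1 E1]].
      assert (HUm : U (al m 1)) by (rewrite H1m; exact HUt).
      destruct (Hpm 1 (conj Rle_0_1 (Rle_refl 1)) U HU HUm) as [e2 [He2 E2]].
      pose proof (cc_pos (S m)). pose proof (cc_pos m). pose proof (a_lt_S m).
      set (d1 := Rmin (e1 / cc (S m)) (a (S (S m)) - t)).
      set (d2 := Rmin (e2 / cc m) (t - a m)).
      exists (Rmin d1 d2). split.
      { apply Rmin_glb_lt; apply Rmin_glb_lt; try lra; apply Rdiv_lt_0_compat; lra. }
      intros s Hs Hd.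
      assert (Hd1 : Rabs (s - t) < d1) by (eapply Rlt_le_trans; [exact Hd| apply Rmin_l]).
      assert (Hd2 : Rabs (s - t) < d2) by (eapply Rlt_le_trans; [exact Hd| apply Rmin_r]).
      assert (K1 : Rabs (s - t) < e1 / cc (S m)) by (eapply Rlt_le_trans; [exact Hd1| apply Rmin_l]).
      assert (K2 : Rabs (s - t) < a (S (S m)) - t) by (eapply Rlt_le_trans; [exact Hd1| apply Rmin_r]).
      assert (K3 : Rabs (s - t) < e2 / cc m) by (eapply Rlt_le_trans; [exact Hd2| apply Rmin_l]).
      assert (K4 : Rabs (s - t) < t - a m) by (eapply Rlt_le_trans; [exact Hd2| apply Rmin_r]).
      clear Hd Hd1 Hd2.
      destruct (Rle_lt_dec (a (S m)) s) as [Hs1|Hs1].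
      * assert (Hseg : a (S m) <= s <= a (S (S m))) by (split; [lra|]; split_Rabs; lra).
        rewrite (seg_eval X x al Hl (S m) s Hseg). apply E1. apply rr_I; auto.
        rewrite <- (rr_a (S m)), <- Ht0. apply Rabs_rr. exact K1.
      * assert (Hseg : a m <= s <= a (S m)) by (split; [|lra]; split_Rabs; lra).
        rewrite (seg_eval X x al Hl m s Hseg). apply E2. apply rr_I; auto.
        rewrite <- (rr_aS m), <- Ht0. apply Rabs_rr. exact K3.
Qed.

Definition clamp (z : R) : R := Rmax 0 (Rmin 1 z).
Lemma clamp_I z : unit_I (clamp z).
Proof. unfold clamp, unit_I, Rmax, Rmin. repeat destruct Rle_dec; lra. Qed.
Lemma clamp_id z : unit_I z -> clamp z = z.
Proof. unfold clamp, unit_I, Rmax, Rmin. intros. repeat destruct Rle_dec; lra. Qed.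
Lemma clamp_lip u v : Rabs (clamp u - clamp v) <= Rabs (u - v).
Proof. unfold clamp, Rmax, Rmin. repeat destruct Rle_dec; split_Rabs; lra. Qed.
Lemma clamp_ge1 z : 1 <= z -> clamp z = 1.
Proof. unfold clamp, Rmax, Rmin. intros. repeat destruct Rle_dec; lra. Qed.
Lemma clamp_le0 z : z <= 0 -> clamp z = 0.
Proof. unfold clamp, Rmax, Rmin. intros. repeat destruct Rle_dec; lra. Qed.

Definition rlipb (f : R -> R -> R) : Prop :=
  exists L, 0 < L /\ (forall s t, unit_I s -> unit_I t -> Rabs (f s t) <= L) /\
   (forall s t s' t', unit_I s -> unit_I t -> unit_I s' -> unit_I t' ->
      Rabs (f s' t' - f s t) <= L * (Rabs (s' - s) + Rabs (t' - t))).

Lemma dpos s t s' t' : 0 <= Rabs (s' - s) + Rabs (t' - t).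
Proof. pose proof (Rabs_pos (s' - s)); pose proof (Rabs_pos (t'-t)); lra. Qed.

Lemma rlipb_const c : rlipb (fun _ _ => c).
Proof. exists (Rabs c + 1). repeat split.
  - pose proof (Rabs_pos c); lra.
  - intros; lra.
  - intros. replace (c - c) with 0 by ring. rewrite Rabs_R0.
    pose proof (dpos s t s' t'). pose proof (Rabs_pos c). nra. Qed.
Lemma rlipb_s : rlipb (fun s _ => s).
Proof. exists 1. repeat split; [lra| |].
  - intros s t [] _. split_Rabs; lra.
  - intros. pose proof (Rabs_pos (t' - t)). lra. Qed.
Lemma rlipb_t : rlipb (fun _ t => t).
Proof. exists 1. repeat split; [lra| |].
  - intros s t _ []. split_Rabs; lra.
  - intros. pose proof (Rabs_pos (s' - s)). lra. Qed.
Lemma rlipb_plus f g : rlipb f -> rlipb g -> rlipb (fun s t => f s t + g s t).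
Proof. intros [L1 [P1 [B1 H1]]] [L2 [P2 [B2 H2]]]. exists (L1 + L2). repeat split; [lra| |].
  - intros. specialize (B1 s t H H0). specialize (B2 s t H H0).
    pose proof (Rabs_triang (f s t) (g s t)). lra.
  - intros. specialize (H1 s t s' t' H H0 H3 H4). specialize (H2 s t s' t' H H0 H3 H4).
    replace (f s' t' + g s' t' - (f s t + g s t)) with ((f s' t' - f s t) + (g s' t' - g s t)) by ring.
    pose proof (Rabs_triang (f s' t' - f s t) (g s' t' - g s t)). lra. Qed.
Lemma rlipb_minus f g : rlipb f -> rlipb g -> rlipb (fun s t => f s t - g s t).
Proof. intros [L1 [P1 [B1 H1]]] [L2 [P2 [B2 H2]]]. exists (L1 + L2). repeat split; [lra| |].
  - intros. specialize (B1 s t H H0). specialize (B2 s t H H0).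
    pose proof (Rabs_triang (f s t) (- g s t)) as T. rewrite Rabs_Ropp in T. unfold Rminus. lra.
  - intros. specialize (H1 s t s' t' H H0 H3 H4). specialize (H2 s t s' t' H H0 H3 H4).
    replace (f s' t' - g s' t' - (f s t - g s t)) with ((f s' t' - f s t) + - (g s' t' - g s t)) by ring.
    pose proof (Rabs_triang (f s' t' - f s t) (- (g s' t' - g s t))) as T. rewrite Rabs_Ropp in T. lra. Qed.
Lemma rlipb_mult f g : rlipb f -> rlipb g -> rlipb (fun s t => f s t * g s t).
Proof. intros [L1 [P1 [B1 H1]]] [L2 [P2 [B2 H2]]]. exists (2 * L1 * L2 + 1). repeat split; [nra| |].
  - intros. specialize (B1 s t H H0). specialize (B2 s t H H0). rewrite Rabs_mult.
    pose proof (Rabs_pos (f s t)). pose proof (Rabs_pos (g s t)). nra.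
  - intros. specialize (H1 s t s' t' H H0 H3 H4). specialize (H2 s t s' t' H H0 H3 H4).
    pose proof (B1 s' t' H3 H4). pose proof (B2 s t H H0).
    replace (f s' t' * g s' t' - f s t * g s t) with (f s' t' * (g s' t' - g s t) + g s t * (f s' t' - f s t)) by ring.
    eapply Rle_trans; [apply Rabs_triang|]. rewrite !Rabs_mult.
    pose proof (dpos s t s' t'). set (d := Rabs (s' - s) + Rabs (t' - t)) in *.
    pose proof (Rabs_pos (f s' t')). pose proof (Rabs_pos (g s t)).
    pose proof (Rabs_pos (g s' t' - g s t)). pose proof (Rabs_pos (f s' t' - f s t)).
    assert (Rabs (f s' t') * Rabs (g s' t' - g s t) <= L1 * (L2 * d)) by (apply Rmult_le_compat; auto).
    assert (Rabs (g s t) * Rabs (f s' t' - f s t) <= L2 * (L1 * d)) by (apply Rmult_le_compat; auto).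
    nra. Qed.
Lemma rlipb_min f g : rlipb f -> rlipb g -> rlipb (fun s t => Rmin (f s t) (g s t)).
Proof. intros [L1 [P1 [B1 H1]]] [L2 [P2 [B2 H2]]]. exists (L1 + L2). repeat split; [lra| |].
  - intros. specialize (B1 s t H H0). specialize (B2 s t H H0).
    revert B1 B2. unfold Rmin. destruct Rle_dec; split_Rabs; lra.
  - intros. specialize (H1 s t s' t' H H0 H3 H4). specialize (H2 s t s' t' H H0 H3 H4).
    pose proof (dpos s t s' t'). set (d := Rabs (s' - s) + Rabs (t' - t)) in *.
    assert (Rabs (Rmin (f s' t') (g s' t') - Rmin (f s t) (g s t)) <= Rabs (f s' t' - f s t) + Rabs (g s' t' - g s t))
      by (unfold Rmin; repeat destruct Rle_dec; split_Rabs; lra).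
    nra. Qed.

Ltac rl := repeat first [apply rlipb_const | apply rlipb_s | apply rlipb_t | apply rlipb_minus
  | apply rlipb_plus | apply rlipb_mult | apply rlipb_min].

Lemma test : rlipb (fun s t => Rmin (Rmin t (1/3)) (1 - t) * (s - t) * (1 + 6 * t) - 3*s).
Proof. rl. Qed.

Section Cont.
Variable M : TopSpace.

Lemma lipd L s t s' t' e : 0 < L -> Rabs (s' - s) < e / (2 * L) -> Rabs (t' - t) < e / (2 * L) ->
  L * (Rabs (s' - s) + Rabs (t' - t)) < e.
Proof. intros. assert (e / (2 * L) * (2 * L) = e) by (field; lra). nra. Qed.

Lemma Ccomp1 (q : R -> M) f : is_path M q -> rlipb f -> cont_on_square M (fun s t => q (clamp (f s t))).
Proof.
  intros Hq [L [HL [_ Hl]]] s t Hs Ht U HU HU0.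
  destruct (Hq _ (clamp_I (f s t)) U HU HU0) as [e1 [He1 E1]].
  exists (e1 / (2 * L)). split; [apply Rdiv_lt_0_compat; lra|].
  intros s' t' Hs' Ht' Ds Dt. apply E1; [apply clamp_I|].
  eapply Rle_lt_trans; [apply clamp_lip|]. eapply Rle_lt_trans; [apply Hl; auto|]. apply lipd; auto.
Qed.

Lemma Ccomp2 (G : R -> R -> M) f g : cont_on_square M G -> rlipb f -> rlipb g ->
  cont_on_square M (fun s t => G (clamp (f s t)) (clamp (g s t))).
Proof.
  intros HG [L [HL [_ Hl]]] [L' [HL' [_ Hl']]] s t Hs Ht U HU HU0.
  destruct (HG _ _ (clamp_I (f s t)) (clamp_I (g s t)) U HU HU0) as [e1 [He1 E1]].
  exists (Rmin (e1 / (2 * L)) (e1 / (2 * L'))). split.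
  { apply Rmin_glb_lt; apply Rdiv_lt_0_compat; lra. }
  intros s' t' Hs' Ht' Ds Dt.
  pose proof (Rmin_l (e1 / (2 * L)) (e1 / (2 * L'))). pose proof (Rmin_r (e1 / (2 * L)) (e1 / (2 * L'))).
  apply E1; try apply clamp_I.
  - eapply Rle_lt_trans; [apply clamp_lip|]. eapply Rle_lt_trans; [apply Hl; auto|]. apply lipd; lra.
  - eapply Rle_lt_trans; [apply clamp_lip|]. eapply Rle_lt_trans; [apply Hl'; auto|]. apply lipd; lra.
Qed.

Lemma Cconst (c : M) : cont_on_square M (fun _ _ => c).
Proof. intros s t _ _ U _ HU. exists 1. split; [lra|]. auto. Qed.

Lemma path_of_sq (K : R -> R -> M) : cont_on_square M K -> is_path M (fun s => K s 0).
Proof.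
  intros HK s Hs U HU HU0. destruct (HK s 0 Hs (conj (Rle_refl 0) Rle_0_1) U HU HU0) as [e [He E]].
  exists e. split; auto. intros s' Hs' D. apply E; auto. split; lra.
  replace (0 - 0) with 0 by ring. rewrite Rabs_R0. auto.
Qed.

Definition glue (g : R -> R -> R) (K1 K2 : R -> R -> M) (s t : R) : M :=
  if Rle_dec (g s t) 0 then K1 s t else K2 s t.

Lemma glue_cont g K1 K2 : rlipb g -> cont_on_square M K1 -> cont_on_square M K2 ->
  (forall s t, unit_I s -> unit_I t -> g s t = 0 -> K1 s t = K2 s t) ->
  cont_on_square M (glue g K1 K2).
Proof.
  intros [L [HL [_ Hl]]] H1 H2 Hag s t Hs Ht U HU HU0. unfold glue in *.
  destruct (Rtotal_order (g s t) 0) as [Hn|[Hz|Hp]].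
  - destruct (Rle_dec (g s t) 0); [|lra].
    destruct (H1 s t Hs Ht U HU HU0) as [e1 [He1 E1]].
    exists (Rmin e1 ((- g s t) / (2 * L))). split.
    { apply Rmin_glb_lt; [lra| apply Rdiv_lt_0_compat; lra]. }
    intros s' t' Hs' Ht' Ds Dt.
    pose proof (Rmin_l e1 ((- g s t) / (2 * L))). pose proof (Rmin_r e1 ((- g s t) / (2 * L))).
    assert (Rabs (g s' t' - g s t) < - g s t) by (eapply Rle_lt_trans; [apply Hl; auto| apply lipd; lra]).
    destruct (Rle_dec (g s' t') 0); [| split_Rabs; lra].
    apply E1; auto; lra.
  - destruct (Rle_dec (g s t) 0); [|lra].
    destruct (H1 s t Hs Ht U HU HU0) as [e1 [He1 E1]].
    rewrite (Hag s t Hs Ht Hz) in HU0.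
    destruct (H2 s t Hs Ht U HU HU0) as [e2 [He2 E2]].
    exists (Rmin e1 e2). split; [apply Rmin_glb_lt; lra|].
    intros s' t' Hs' Ht' Ds Dt.
    pose proof (Rmin_l e1 e2). pose proof (Rmin_r e1 e2).
    destruct (Rle_dec (g s' t') 0); [apply E1 | apply E2]; auto; lra.
  - destruct (Rle_dec (g s t) 0); [lra|].
    destruct (H2 s t Hs Ht U HU HU0) as [e1 [He1 E1]].
    exists (Rmin e1 ((g s t) / (2 * L))). split.
    { apply Rmin_glb_lt; [lra| apply Rdiv_lt_0_compat; lra]. }
    intros s' t' Hs' Ht' Ds Dt.
    pose proof (Rmin_l e1 ((g s t) / (2 * L))). pose proof (Rmin_r e1 ((g s t) / (2 * L))).
    assert (Rabs (g s' t' - g s t) < g s t) by (eapply Rle_lt_trans; [apply Hl; auto| apply lipd; lra]).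
    destruct (Rle_dec (g s' t') 0); [split_Rabs; lra|].
    apply E1; auto; lra.
Qed.
End Cont.

Definition hh (t : R) : R := Rmin (2 * t) (2 - 2 * t).
Lemma hh0 : hh 0 = 0. Proof. unfold hh, Rmin; destruct Rle_dec; lra. Qed.
Lemma hh1 : hh 1 = 0. Proof. unfold hh, Rmin; destruct Rle_dec; lra. Qed.
Lemma hhh : hh (1/2) = 1. Proof. unfold hh, Rmin; destruct Rle_dec; lra. Qed.
Lemma hhI t : unit_I t -> 0 <= hh t <= 1. Proof. unfold hh, Rmin, unit_I; destruct Rle_dec; lra. Qed.

Lemma inv_small N n : (0 < N)%nat -> (N <= n)%nat -> / (INR n + 1) <= / INR N.
Proof. intros. apply Rinv_le_contravar. apply lt_0_INR; auto. apply le_INR in H0. lra. Qed.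

Lemma clamp_lipI u v : unit_I v -> Rabs (clamp u - v) <= Rabs (u - v).
Proof. intro H. pose proof (clamp_lip u v). rewrite (clamp_id v H) in H0. exact H0. Qed.

Section Prod.
Variable M : TopSpace.

Definition fs (F : R -> R -> M) s0 t0 (sk tk : nat -> R) (k : nat) (u : R) : M :=
  F (clamp (s0 + hh u * (sk k - s0))) (clamp (t0 + hh u * (tk k - t0))).

Lemma nullF F s0 t0 sk tk : cont_on_square M F -> unit_I s0 -> unit_I t0 ->
  (forall k, Rabs (sk k - s0) < / (INR k + 1) /\ Rabs (tk k - t0) < / (INR k + 1)) ->
  null_seq M (F s0 t0) (fs F s0 t0 sk tk).
Proof.
  intros HF Hs0 Ht0 Hk. split.
  - intro k. split; [|split].
    + apply (path_of_sq M (fun u _ => F (clamp (s0 + hh u * (sk k - s0))) (clamp (t0 + hh u * (tk k - t0))))).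
      apply Ccomp2; auto; unfold hh; rl.
    + unfold fs. rewrite hh0. replace (s0 + 0 * (sk k - s0)) with s0 by ring.
      replace (t0 + 0 * (tk k - t0)) with t0 by ring. rewrite !clamp_id; auto.
    + unfold fs. rewrite hh1. replace (s0 + 0 * (sk k - s0)) with s0 by ring.
      replace (t0 + 0 * (tk k - t0)) with t0 by ring. rewrite !clamp_id; auto.
  - intros U HU HU0. destruct (HF s0 t0 Hs0 Ht0 U HU HU0) as [e [He E]].
    destruct (archimed_cor1 e He) as [N [HN HN0]].
    exists N. intros n Hn u Hu. unfold fs. destruct (Hk n) as [K1 K2].
    pose proof (inv_small N n HN0 Hn). pose proof (hhI u Hu).
    apply E; try apply clamp_I.
    + eapply Rle_lt_trans; [apply clamp_lipI; auto|].
      replace (s0 + hh u * (sk n - s0) - s0) with (hh u * (sk n - s0)) by ring.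
      rewrite Rabs_mult, (Rabs_right (hh u)) by lra.
      pose proof (Rabs_pos (sk n - s0)). nra.
    + eapply Rle_lt_trans; [apply clamp_lipI; auto|].
      replace (t0 + hh u * (tk n - t0) - t0) with (hh u * (tk n - t0)) by ring.
      rewrite Rabs_mult, (Rabs_right (hh u)) by lra.
      pose proof (Rabs_pos (tk n - t0)). nra.
Qed.

Lemma fs_half F s0 t0 sk tk k : unit_I (sk k) -> unit_I (tk k) -> fs F s0 t0 sk tk k (1/2) = F (sk k) (tk k).
Proof. intros. unfold fs. rewrite hhh. replace (s0 + 1 * (sk k - s0)) with (sk k) by ring.
  replace (t0 + 1 * (tk k - t0)) with (tk k) by ring. rewrite !clamp_id; auto. Qed.

Variable op : M -> M -> M.
Hypothesis Hop : forall alpha beta : R -> M, is_path M alpha -> is_path M beta ->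
     is_path M (fun t => op (alpha t) (beta t)).

Lemma sq_prod F G : cont_on_square M F -> cont_on_square M G ->
  cont_on_square M (fun s t => op (F s t) (G s t)).
Proof.
  intros HF HG s0 t0 Hs0 Ht0 U HU HU0.
  apply NNPP; intro Hno.
  assert (Hk : forall k : nat, exists p : R * R, unit_I (fst p) /\ unit_I (snd p) /\
      Rabs (fst p - s0) < / (INR k + 1) /\ Rabs (snd p - t0) < / (INR k + 1) /\
      ~ U (op (F (fst p) (snd p)) (G (fst p) (snd p)))).
  { intro k. apply NNPP; intro Hk. apply Hno. exists (/ (INR k + 1)). split.
    { apply Rinv_0_lt_compat. pose proof (pos_INR k); lra. }
    intros s' t' Hs' Ht' H1 H2. apply NNPP; intro HnU. apply Hk. exists (s', t'). simpl; auto. }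
  set (z := fun k => proj1_sig (constructive_indefinite_description _ (Hk k))).
  assert (Hz : forall k, unit_I (fst (z k)) /\ unit_I (snd (z k)) /\
      Rabs (fst (z k) - s0) < / (INR k + 1) /\ Rabs (snd (z k) - t0) < / (INR k + 1) /\
      ~ U (op (F (fst (z k)) (snd (z k))) (G (fst (z k)) (snd (z k))))).
  { intro k. exact (proj2_sig (constructive_indefinite_description _ (Hk k))). }
  set (sk := fun k => fst (z k)). set (tk := fun k => snd (z k)).
  assert (Hc : forall k, Rabs (sk k - s0) < / (INR k + 1) /\ Rabs (tk k - t0) < / (INR k + 1)).
  { intro k. destruct (Hz k) as [_ [_ [A [B _]]]]. auto. }
  pose proof (nullF F s0 t0 sk tk HF Hs0 Ht0 Hc) as NF.
  pose proof (nullF G s0 t0 sk tk HG Hs0 Ht0 Hc) as NG.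
  pose proof (Hop _ _ (ic_path _ _ _ NF) (ic_path _ _ _ NG)) as HP.
  assert (HU1 : U (op (inf_concat M (F s0 t0) (fs F s0 t0 sk tk) 1) (inf_concat M (G s0 t0) (fs G s0 t0 sk tk) 1)))
    by (rewrite !ic_1; exact HU0).
  destruct (HP 1 (conj Rle_0_1 (Rle_refl 1)) U HU HU1) as [e [He E]].
  destruct (archimed_cor1 e He) as [N [HN HN0]].
  destruct (Hz N) as [Is [It [_ [_ Hn]]]].
  apply Hn.
  assert (Hh : unit_I (1/2)) by (unfold unit_I; lra).
  pose proof (pt_seg N (1/2) Hh) as Hseg. pose proof (a_lt1 (S N)). pose proof (a_pos N).
  pose proof (one_minus_a N). pose proof (inv_small N N HN0 (le_n N)).
  specialize (E (a N + (1/2) / cc N)).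
  rewrite (seg_pt M _ _ (proj1 NF) N (1/2) Hh), (seg_pt M _ _ (proj1 NG) N (1/2) Hh) in E.
  rewrite !fs_half in E by auto. apply E.
  - unfold unit_I; lra.
  - split_Rabs; lra.
Qed.
End Prod.

Definition W (t : R) : R := Rmin (Rmin t (1/3)) (1 - t).
Lemma W_lo t : t <= 1/3 -> W t = t. Proof. unfold W, Rmin; intros; repeat destruct Rle_dec; lra. Qed.
Lemma W_mid t : 1/3 <= t <= 2/3 -> W t = 1/3. Proof. unfold W, Rmin; intros; repeat destruct Rle_dec; lra. Qed.
Lemma W_hi t : 2/3 <= t -> W t = 1 - t. Proof. unfold W, Rmin; intros; repeat destruct Rle_dec; lra. Qed.
Lemma W_range t : unit_I t -> 0 <= W t <= 1/3.
Proof. unfold W, Rmin, unit_I; intros; repeat destruct Rle_dec; lra. Qed.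
Lemma c0 : clamp 0 = 0. Proof. apply clamp_id; unfold unit_I; lra. Qed.
Lemma c1 : clamp 1 = 1. Proof. apply clamp_id; unfold unit_I; lra. Qed.

Section L4.
Variable M : TopSpace.
Variable op : M -> M -> M.
Variable e x : M.
Hypothesis Hop : forall alpha beta : R -> M, is_path M alpha -> is_path M beta ->
     is_path M (fun t => op (alpha t) (beta t)).
Hypothesis opl : forall a, op e a = a.
Hypothesis opr : forall a, op a e = a.
Variables (q A B : R -> M) (G : R -> R -> M).
Hypothesis Hq : is_path M q.
Hypothesis q0 : q 0 = e.
Hypothesis q1 : q 1 = x.
Hypothesis HA : is_path M A.
Hypothesis HB : is_path M B.
Hypothesis A0 : A 0 = e.
Hypothesis A1 : A 1 = e.
Hypothesis B0 : B 0 = e.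
Hypothesis B1 : B 1 = e.
Hypothesis HG : cont_on_square M G.
Hypothesis G0 : forall s, unit_I s -> G s 0 = op x (A s).
Hypothesis G1 : forall s, unit_I s -> G s 1 = op x (B s).
Hypothesis Gl : forall t, unit_I t -> G 0 t = x.
Hypothesis Gr : forall t, unit_I t -> G 1 t = x.

Definition M1 s t := op (q (clamp (3*t))) (A (clamp ((s - t) * (1 + 6*t)))).
Definition M2 s t := G (clamp (3*s - 1)) (clamp (3*t - 1)).
Definition M3 s t := op (q (clamp (3 - 3*t))) (B (clamp ((s - (1 - t)) * (1 + 6*(1-t))))).
Definition Mid := glue M (fun s t => t - 1/3) M1 (glue M (fun s t => t - 2/3) M2 M3).
Definition P1 s (t : R) := q (clamp (3*s)).
Definition P2 s (t : R) := q (clamp (3 - 3*s)).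
Definition KK := glue M (fun s t => s - W t) P1 (glue M (fun s t => 1 - W t - s) P2 Mid).

Lemma Mid_cont : cont_on_square M Mid.
Proof.
  unfold Mid. apply glue_cont; [rl | | |].
  - unfold M1. refine (sq_prod M op Hop (fun s t => q (clamp (3*t))) (fun s t => A (clamp ((s - t) * (1 + 6*t)))) _ _).
    + refine (Ccomp1 M q (fun s t => 3*t) _ _); auto; rl.
    + refine (Ccomp1 M A (fun s t => (s - t) * (1 + 6*t)) _ _); auto; rl.
  - apply glue_cont; [rl | | |].
    + unfold M2. refine (Ccomp2 M G (fun s t => 3*s - 1) (fun s t => 3*t - 1) _ _ _); auto; rl.
    + unfold M3. refine (sq_prod M op Hop (fun s t => q (clamp (3 - 3*t))) (fun s t => B (clamp ((s - (1 - t)) * (1 + 6*(1-t))))) _ _).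
      * refine (Ccomp1 M q (fun s t => 3 - 3*t) _ _); auto; rl.
      * refine (Ccomp1 M B (fun s t => (s - (1 - t)) * (1 + 6*(1-t))) _ _); auto; rl.
    + intros s t Hs Ht Hz. assert (t = 2/3) by lra. subst t. unfold M2, M3.
      replace (3 * (2/3) - 1) with 1 by field. replace (3 - 3 * (2/3)) with 1 by field.
      replace ((s - (1 - 2/3)) * (1 + 6 * (1 - 2/3))) with (3 * s - 1) by field.
      rewrite c1, q1, G1; auto. apply clamp_I.
  - intros s t Hs Ht Hz. assert (t = 1/3) by lra. subst t. unfold M1, glue.
    destruct (Rle_dec (1/3 - 2/3) 0); [|lra]. unfold M2.
    replace (3 * (1/3) - 1) with 0 by field. replace (3 * (1/3)) with 1 by field.
    replace ((s - 1/3) * (1 + 6 * (1/3))) with (3 * s - 1) by field.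
    rewrite c1, c0, q1, G0; auto. apply clamp_I.
Qed.

Lemma KK_cont : cont_on_square M KK.
Proof.
  unfold KK. apply glue_cont; [unfold W; rl | | |].
  - unfold P1. refine (Ccomp1 M q (fun s t => 3 * s) _ _); auto; rl.
  - apply glue_cont; [unfold W; rl | | apply Mid_cont |].
    + unfold P2. refine (Ccomp1 M q (fun s t => 3 - 3 * s) _ _); auto; rl.
    + intros s t Hs Ht Hz. pose proof (W_range t Ht). assert (s = 1 - W t) by lra. subst s.
      unfold P2, Mid, glue. destruct (Rle_dec (t - 1/3) 0).
      * rewrite W_lo by lra. unfold M1. replace (3 - 3 * (1 - t)) with (3 * t) by ring.
        rewrite (clamp_ge1 ((1 - t - t) * (1 + 6 * t))) by (destruct Ht; nra). rewrite A1, opr. reflexivity.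
      * destruct (Rle_dec (t - 2/3) 0).
        -- rewrite W_mid by lra. unfold M2. replace (3 * (1 - 1/3) - 1) with 1 by field.
           replace (3 - 3 * (1 - 1/3)) with 1 by field. rewrite c1, q1, Gr; auto. apply clamp_I.
        -- rewrite W_hi by lra. unfold M3. replace (1 - (1 - t)) with t by ring.
           rewrite (clamp_ge1 ((t - (1 - t)) * (1 + 6 * (1 - t)))) by (destruct Ht; nra). rewrite B1, opr. reflexivity.
  - intros s t Hs Ht Hz. pose proof (W_range t Ht). assert (s = W t) by lra. subst s.
    unfold glue. destruct (Rle_dec (1 - W t - W t) 0); [lra|].
    unfold P1, Mid, glue. destruct (Rle_dec (t - 1/3) 0).
    + rewrite W_lo by lra. unfold M1. replace ((t - t) * (1 + 6 * t)) with 0 by ring.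
      rewrite c0, A0, opr. reflexivity.
    + destruct (Rle_dec (t - 2/3) 0).
      * rewrite W_mid by lra. unfold M2. replace (3 * (1/3) - 1) with 0 by field.
        replace (3 * (1/3)) with 1 by field. rewrite c0, c1, q1, Gl; auto. apply clamp_I.
      * rewrite W_hi by lra. unfold M3. replace ((1 - t - (1 - t)) * (1 + 6 * (1 - t))) with 0 by ring.
        replace (3 * (1 - t)) with (3 - 3 * t) by ring. rewrite c0, B0, opr. reflexivity.
Qed.

Lemma L4 : path_homotopic M A B.
Proof.
  exists KK. split; [apply KK_cont|]. split; [|split; [|split]].
  - intros s Hs. unfold KK, glue. rewrite W_lo by lra.
    destruct (Rle_dec (s - 0) 0).
    + assert (s = 0) by (destruct Hs; lra). subst s. unfold P1. replace (3 * 0) with 0 by ring. rewrite c0, q0, A0; auto.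
    + destruct (Rle_dec (1 - 0 - s) 0).
      * assert (s = 1) by (destruct Hs; lra). subst s. unfold P2. replace (3 - 3 * 1) with 0 by ring. rewrite c0, q0, A1; auto.
      * unfold Mid, glue. destruct (Rle_dec (0 - 1/3) 0); [|lra]. unfold M1.
        replace (3 * 0) with 0 by ring. replace ((s - 0) * (1 + 6 * 0)) with s by ring.
        rewrite c0, q0, opl, clamp_id; auto.
  - intros s Hs. unfold KK, glue. rewrite W_hi by lra. replace (1 - 1) with 0 by ring.
    destruct (Rle_dec (s - 0) 0).
    + assert (s = 0) by (destruct Hs; lra). subst s. unfold P1. replace (3 * 0) with 0 by ring. rewrite c0, q0, B0; auto.
    + destruct (Rle_dec (1 - 0 - s) 0).
      * assert (s = 1) by (destruct Hs; lra). subst s. unfold P2. replace (3 - 3 * 1) with 0 by ring. rewrite c0, q0, B1; auto.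
      * unfold Mid, glue. destruct (Rle_dec (1 - 1/3) 0); [lra|]. destruct (Rle_dec (1 - 2/3) 0); [lra|]. unfold M3.
        replace (3 - 3 * 1) with 0 by ring. replace ((s - (1 - 1)) * (1 + 6 * (1 - 1))) with s by ring.
        rewrite c0, q0, opl, clamp_id; auto.
  - intros t Ht. pose proof (W_range t Ht). unfold KK, glue. destruct (Rle_dec (0 - W t) 0); [|lra].
    unfold P1. replace (3 * 0) with 0 by ring. rewrite c0, q0, A0; auto.
  - intros t Ht. pose proof (W_range t Ht). unfold KK, glue. destruct (Rle_dec (1 - W t) 0); [lra|].
    destruct (Rle_dec (1 - W t - 1) 0); [|lra].
    unfold P2. replace (3 - 3 * 1) with 0 by ring. rewrite c0, q0, A1; auto.
Qed.
End L4.

Lemma const_path (M : TopSpace) (c : M) : is_path M (fun _ => c).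
Proof. intros t _ U _ HU. exists 1. split; [lra|]. auto. Qed.

Lemma ic0 M x al : (forall n, is_loop M x (al n)) -> inf_concat M x al 0 = x.
Proof. intro Hl. rewrite (seg_eval M x al Hl 0 0).
  - rewrite <- a0. rewrite rr_a. destruct (Hl 0%nat) as [_ [H _]]. exact H.
  - rewrite a0. pose proof (a_lt_S 0). rewrite a0 in H. lra.
Qed.

Lemma ic_mul (M : TopSpace) (op : M -> M -> M) e x al : op x e = x ->
  forall t, inf_concat M x (fun n s => op x (al n s)) t = op x (inf_concat M e al t).
Proof. intros H t. unfold inf_concat. destruct (Rlt_dec t 1); [reflexivity| symmetry; exact H]. Qed.

Section Main.
Variable M : TopSpace.
Variable op : M -> M -> M.
Variable e x : M.
Hypothesis Hop : forall alpha beta : R -> M, is_path M alpha -> is_path M beta ->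
     is_path M (fun t => op (alpha t) (beta t)).
Hypothesis opl : forall a, op e a = a.
Hypothesis opr : forall a, op a e = a.

Lemma null_mul al : null_seq M e al -> null_seq M x (fun n s => op x (al n s)).
Proof.
  intros N. pose proof N as [Hl Hnl]. split.
  - intro n. destruct (Hl n) as [Hp [H0 H1]]. split; [|split].
    + exact (Hop _ _ (const_path M x) Hp).
    + simpl. rewrite H0, opr. reflexivity.
    + simpl. rewrite H1, opr. reflexivity.
  - intros U HU HUx.
    pose proof (Hop _ _ (const_path M x) (ic_path M e al N)) as HP.
    assert (HU1 : U (op x (inf_concat M e al 1))) by (rewrite ic_1, opr; exact HUx).
    destruct (HP 1 (conj Rle_0_1 (Rle_refl 1)) U HU HU1) as [eps [He E]].
    destruct (archimed_cor1 eps He) as [K [HK HK0]].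
    exists K. intros n Hn r Hr.
    pose proof (pt_seg n r Hr). pose proof (a_lt1 (S n)). pose proof (a_pos n).
    pose proof (one_minus_a n). pose proof (inv_small K n HK0 Hn).
    specialize (E (a n + r / cc n)). rewrite (seg_pt M e al Hl n r Hr) in E. apply E.
    + unfold unit_I; lra.
    + split_Rabs; lra.
Qed.

Lemma hom_mul a b : path_homotopic M a b -> path_homotopic M (fun s => op x (a s)) (fun s => op x (b s)).
Proof.
  intros [H [HH [H0 [H1 [Hl Hr]]]]].
  exists (fun s t => op x (H s t)). split.
  - exact (sq_prod M op Hop (fun _ _ => x) H (Cconst M x) HH).
  - repeat split; intros; simpl; [rewrite H0| rewrite H1| rewrite Hl| rewrite Hr]; auto.
Qed.
End Main.

Theorem mainTheorem13 (M : TopSpace) (op : M -> M -> M) (e : M) :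
  pre_delta_monoid M op e -> path_connected M ->
  ~ wd_inf_products M e -> forall x : M, ~ wd_inf_products M x.
Proof.
  intros [Hassoc [opl [opr Hop]]] Hpc Hne x Hwx. apply Hne.
  intros al be Na Nb Hhom.
  pose proof (Hwx _ _ (null_mul M op e x Hop opr al Na) (null_mul M op e x Hop opr be Nb)
     (fun n => hom_mul M op x Hop _ _ (Hhom n))) as [G [HG [G0 [G1 [Gl Gr]]]]].
  destruct (Hpc e x) as [q [Hq [q0 q1]]].
  assert (Exe : op x e = x) by apply opr.
  apply (L4 M op e x Hop opl opr q _ _ G Hq q0 q1 (ic_path M e al Na) (ic_path M e be Nb)).
  - apply ic0; apply Na.
  - apply ic_1.
  - apply ic0; apply Nb.
  - apply ic_1.
  - exact HG.
  - intros s Hs. rewrite G0 by auto. exact (ic_mul M op e x al Exe s).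
  - intros s Hs. rewrite G1 by auto. exact (ic_mul M op e x be Exe s).
  - intros t Ht. rewrite Gl by auto. rewrite (ic_mul M op e x al Exe). rewrite ic0 by apply Na. auto.
  - intros t Ht. rewrite Gr by auto. rewrite (ic_mul M op e x al Exe). rewrite ic_1. auto.
Qed.
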